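(* Let $\alpha_i,\beta_i,\gamma_i,\delta_i\in(0,\pi)$ satisfy $\alpha_i\pm\beta_i\pm\gamma_i\pm\delta_i\not\equiv0\pmod{2\pi}$ for all sign choices and $M_i>0$, for each $i=1,\dots,4$. Then for each $i$: \[\cos\alpha_i=\varepsilon_i\frac{1-y_iz_iu_i+x_iz_iu_i-x_iy_iu_i}{2\sqrt{x_iz_iu_i(1+y_i)(1+u_iy_i)}},\qquad \cos\gamma_i=\varepsilon_i\frac{1+y_iz_iu_i-x_iz_iu_i-x_iy_iu_i}{2\sqrt{y_iz_iu_i(1+x_i)(1+u_ix_i)}},\] \[\cos\delta_i=\varepsilon_i\frac{1-y_iz_iu_i-x_iz_iu_i+x_iy_iu_i}{2\sqrt{x_iy_iu_i(1+z_i)(1+u_iz_i)}},\qquad \cos\sigma_i=\frac{1-u_i(x_iy_i+x_iz_i+y_iz_i+2x_iy_iz_i)}{2\sqrt{x_iy_iz_iu_i^2(1+x_i)(1+y_i)(1+z_i)}},\] \[\cos\beta_i=\varepsilon_i\frac{u_i(1+x_i)(1+y_i)(1+z_i)+(1+u_ix_i)(1+u_iy_i)(1+u_iz_i)-u_ix_iy_iz_i(u_i-1)^2}{2\sqrt{u_i(1+x_i)(1+y_i)(1+z_i)(1+u_ix_i)(1+u_iy_i)(1+u_iz_i)}}.\]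
   Context: $\sigma_i=(\alpha_i+\beta_i+\gamma_i+\delta_i)/2$, $\varepsilon_i=\operatorname{sign}(\sin\sigma_i)$, $\overline{\alpha}_i=\sigma_i-\alpha_i$, $\overline{\beta}_i=\sigma_i-\beta_i$, $\overline{\gamma}_i=\sigma_i-\gamma_i$, $\overline{\delta}_i=\sigma_i-\delta_i$; $a_i=\sin\alpha_i/\sin\overline{\alpha}_i$, $b_i=\sin\beta_i/\sin\overline{\beta}_i$, $c_i=\sin\gamma_i/\sin\overline{\gamma}_i$, $d_i=\sin\delta_i/\sin\overline{\delta}_i$, $M_i=a_ib_ic_id_i$, $r_i=a_id_i$, $s_i=c_id_i$, $f_i=a_ic_i$, $u_i=1-M_i$, $x_i=1/(r_i-1)$, $y_i=1/(s_i-1)$, $z_i=1/(f_i-1)$. *)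

(* Defs.v *)
From Stdlib Require Import Reals.
Open Scope R_scope.

Definition sign (x : R) : R :=
  if Rlt_dec 0 x then 1 else if Rlt_dec x 0 then -1 else 0.

Definition pm (b : bool) : R := if b then 1 else -1.

Section Quad.
Variables (al be ga de : R).

Definition sigm : R := (al + be + ga + de) / 2.
Definition eps : R := sign (sin sigm).
Definition albar : R := sigm - al.
Definition bebar : R := sigm - be.
Definition gabar : R := sigm - ga.
Definition debar : R := sigm - de.
Definition ca : R := sin al / sin albar.
Definition cb : R := sin be / sin bebar.
Definition cc : R := sin ga / sin gabar.
Definition cd : R := sin de / sin debar.
Definition MM : R := ca * cb * cc * cd.
Definition rr : R := ca * cd.
Definition ss : R := cc * cd.
Definition ff : R := ca * cc.
Definition uu : R := 1 - MM.
Definition xx : R := 1 / (rr - 1).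
Definition yy : R := 1 / (ss - 1).
Definition zz : R := 1 / (ff - 1).
End Quad.

Definition admissible (al be ga de : R) : Prop :=
  0 < al < PI /\ 0 < be < PI /\ 0 < ga < PI /\ 0 < de < PI /\
  (forall (s1 s2 s3 : bool) (k : Z),
      al + pm s1 * be + pm s2 * ga + pm s3 * de <> 2 * IZR k * PI) /\
  0 < MM al be ga de.

(* Main.v *)
Require Import Defs.
From Stdlib Require Import Reals Nsatz Lra Lia.
Open Scope R_scope.

Ltac expand := repeat (first [rewrite sin_plus | rewrite cos_plus | rewrite sin_minus | rewrite cos_minus]).

Lemma trig_h (h1 h2 h3 h4 : R) :
  let S := sin(h1+h2+h3+h4) in let A := sin(h2+h3+h4-h1) in let B := sin(h1+h3+h4-h2) in
  let C := sin(h1+h2+h4-h3) in let D := sin(h1+h2+h3-h4) in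
  let W1 := sin(h1+h2-h3-h4) in let W2 := sin(h1+h3-h2-h4) in let W3 := sin(h1+h4-h2-h3) in
  let sa := sin(h1+h1) in let sb := sin(h2+h2) in let sg := sin(h3+h3) in let sd := sin(h4+h4) in
  sa * sd = A*D + S*W3 /\
  sg * sd = C*D - S*W1 /\
  sa * sg = A*C + S*W2 /\
  sa * sb * sg * sd = A*B*C*D + S*W1*W2*W3 /\
  sg * sd = A*B + W2*W3 /\
  sa * sd = B*C - W1*W2 /\
  sa * sg = B*D - W1*W3 /\
  (cos (h1+h1) + cos (h1+h1)) * (sg * sd) = S*B - C*W3 - A*W1 - D*W2 /\
  (cos (h3+h3) + cos (h3+h3)) * (sa * sd) = S*B + C*W3 + A*W1 - D*W2 /\
  (cos (h4+h4) + cos (h4+h4)) * (sa * sg) = S*B - C*W3 + A*W1 + D*W2 /\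
  (cos (h1+h2+h3+h4) + cos (h1+h2+h3+h4)) * (sa * sg * sd)
     = S*S*B - S*(D*W2 - A*W1 + C*W3) - (A*C*D + A*C*D) /\
  (cos (h2+h2) + cos (h2+h2)) * (S*B) = B*B + S*S - sb * sb.
Proof.
intros.
subst S A B C D W1 W2 W3 sa sb sg sd.
pose proof (sin2_cos2 h1). pose proof (sin2_cos2 h2). pose proof (sin2_cos2 h3). pose proof (sin2_cos2 h4).
unfold Rsqr in *.
repeat split; expand; nsatz.
Qed.

Lemma sin_neg_out x : sin x < 0 -> x < 0 \/ PI < x.
Proof.
intros H. destruct (Rle_dec 0 x); destruct (Rle_dec x PI); try lra.
pose proof (sin_ge_0 x r r0). lra.
Qed.

Lemma sqrt_K t K : 0 <= K -> t = K*K -> sqrt t = K.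
Proof. intros H1 H2; subst; apply sqrt_square; auto. Qed.

Lemma solve2 c k r : k <> 0 -> (c + c) * k = r -> c = r / (2*k).
Proof. intros H1 H2. rewrite <- H2. field. auto. Qed.


Lemma pos_from_div N Q : 0 < N -> Q <> 0 -> 0 < N * / Q -> 0 < Q.
Proof.
intros H1 H2 H3. destruct (Rtotal_order Q 0) as [L|[L|L]]; auto; [|contradiction].
assert (/ Q < 0) by (apply Rinv_lt_0_compat; auto). nra.
Qed.

Lemma neg4 X Y Z W : X < 0 -> 0 <= Y -> 0 <= Z -> 0 <= W -> Y <> 0 -> Z <> 0 -> W <> 0 -> X*Y*Z*W < 0.
Proof.
intros H1 H2 H3 H4 H5 H6 H7.
assert (0 < Y) by (destruct H2; [auto|congruence]).
assert (0 < Z) by (destruct H3; [auto|congruence]).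
assert (0 < W) by (destruct H4; [auto|congruence]).
assert (X*Y < 0) by nra. assert (X*Y*Z < 0) by nra. nra.
Qed.

Ltac nz_tac HM X := let H0 := fresh in intro H0;
  assert (X = 0) by (rewrite H0; unfold Rdiv; rewrite Rinv_0; ring); lra.

Lemma bars_pos a b g d :
  0 < a < PI -> 0 < b < PI -> 0 < g < PI -> 0 < d < PI -> 0 < MM a b g d ->
  0 < sin (albar a b g d) /\ 0 < sin (bebar a b g d) /\
  0 < sin (gabar a b g d) /\ 0 < sin (debar a b g d).
Proof.
intros Ha Hb Hg Hd HM.
unfold MM, ca, cb, cc, cd in HM.
assert (sa: 0 < sin a) by (apply sin_gt_0; lra).
assert (sb: 0 < sin b) by (apply sin_gt_0; lra).
assert (sg: 0 < sin g) by (apply sin_gt_0; lra).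
assert (sd: 0 < sin d) by (apply sin_gt_0; lra).
assert (EA := sin_neg_out (albar a b g d)).
assert (EB := sin_neg_out (bebar a b g d)).
assert (EC := sin_neg_out (gabar a b g d)).
assert (ED := sin_neg_out (debar a b g d)).
assert (GA : 0 <= albar a b g d <= PI -> 0 <= sin (albar a b g d)) by (intros; apply sin_ge_0; lra).
assert (GB : 0 <= bebar a b g d <= PI -> 0 <= sin (bebar a b g d)) by (intros; apply sin_ge_0; lra).
assert (GC : 0 <= gabar a b g d <= PI -> 0 <= sin (gabar a b g d)) by (intros; apply sin_ge_0; lra).
assert (GD : 0 <= debar a b g d <= PI -> 0 <= sin (debar a b g d)) by (intros; apply sin_ge_0; lra).
unfold albar, bebar, gabar, debar, sigm in *.
set (A := sin ((a + b + g + d) / 2 - a)) in *.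
set (B := sin ((a + b + g + d) / 2 - b)) in *.
set (C := sin ((a + b + g + d) / 2 - g)) in *.
set (D := sin ((a + b + g + d) / 2 - d)) in *.
assert (nA : A <> 0).
{ intro H0. assert (sin a / A = 0) by (rewrite H0; unfold Rdiv; rewrite Rinv_0; ring).
  rewrite H in HM. lra. }
assert (nB : B <> 0).
{ intro H0. assert (sin b / B = 0) by (rewrite H0; unfold Rdiv; rewrite Rinv_0; ring).
  rewrite H in HM. lra. }
assert (nC : C <> 0).
{ intro H0. assert (sin g / C = 0) by (rewrite H0; unfold Rdiv; rewrite Rinv_0; ring).
  rewrite H in HM. lra. }
assert (nD : D <> 0).
{ intro H0. assert (sin d / D = 0) by (rewrite H0; unfold Rdiv; rewrite Rinv_0; ring).
  rewrite H in HM. lra. }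
assert (P : 0 < A*B*C*D).
{ assert (E : sin a / A * (sin b / B) * (sin g / C) * (sin d / D)
            = (sin a * sin b * sin g * sin d) * / (A*B*C*D)) by (field; repeat split; auto).
  rewrite E in HM.
  assert (N : 0 < sin a * sin b * sin g * sin d) by (repeat apply Rmult_lt_0_compat; auto).
  apply (pos_from_div _ _ N); auto.
  repeat apply Rmult_integral_contrapositive_currified; auto. }
pose proof neg4 as pos.
assert (pA : 0 < A).
{ destruct (Rtotal_order A 0) as [L|[L|L]]; [|contradiction|exact L].
  exfalso. specialize (EA L). clear HM.
  assert (0 <= B) by (apply GB; clear - EA Ha Hb Hg Hd; destruct EA; lra).
  assert (0 <= C) by (apply GC; clear - EA Ha Hb Hg Hd; destruct EA; lra).
  assert (0 <= D) by (apply GD; clear - EA Ha Hb Hg Hd; destruct EA; lra).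
  assert (A*B*C*D < 0) by (apply pos; auto).
  assert (A*B*C*D = A*B*C*D) by ring. lra. }
assert (pB : 0 < B).
{ destruct (Rtotal_order B 0) as [L|[L|L]]; [|contradiction|exact L].
  exfalso. specialize (EB L). clear HM.
  assert (0 <= A) by (apply GA; clear - EB Ha Hb Hg Hd; destruct EB; lra).
  assert (0 <= C) by (apply GC; clear - EB Ha Hb Hg Hd; destruct EB; lra).
  assert (0 <= D) by (apply GD; clear - EB Ha Hb Hg Hd; destruct EB; lra).
  assert (B*A*C*D < 0) by (apply pos; auto).
  assert (A*B*C*D = B*A*C*D) by ring. lra. }
assert (pC : 0 < C).
{ destruct (Rtotal_order C 0) as [L|[L|L]]; [|contradiction|exact L].
  exfalso. specialize (EC L). clear HM.
  assert (0 <= A) by (apply GA; clear - EC Ha Hb Hg Hd; destruct EC; lra).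
  assert (0 <= B) by (apply GB; clear - EC Ha Hb Hg Hd; destruct EC; lra).
  assert (0 <= D) by (apply GD; clear - EC Ha Hb Hg Hd; destruct EC; lra).
  assert (C*A*B*D < 0) by (apply pos; auto).
  assert (A*B*C*D = C*A*B*D) by ring. lra. }
assert (pD : 0 < D).
{ destruct (Rtotal_order D 0) as [L|[L|L]]; [|contradiction|exact L].
  exfalso. specialize (ED L). clear HM.
  assert (0 <= A) by (apply GA; clear - ED Ha Hb Hg Hd; destruct ED; lra).
  assert (0 <= B) by (apply GB; clear - ED Ha Hb Hg Hd; destruct ED; lra).
  assert (0 <= C) by (apply GC; clear - ED Ha Hb Hg Hd; destruct ED; lra).
  assert (D*A*B*C < 0) by (apply pos; auto).
  assert (A*B*C*D = D*A*B*C) by ring. lra. }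
auto.
Qed.

Ltac nzt := repeat split; repeat match goal with
  | |- - _ <> 0 => apply Ropp_neq_0_compat
  | |- _ * _ <> 0 => apply Rmult_integral_contrapositive_currified
  end; auto; try discrR; try lra.

Ltac kpos := apply Rlt_le; repeat (first [assumption | apply Rdiv_lt_0_compat | apply Rmult_lt_0_compat]).

Lemma sign_pos x : 0 < x -> sign x = 1.
Proof. intros H; unfold sign; destruct (Rlt_dec 0 x); [auto|lra]. Qed.

Lemma sign_neg x : x < 0 -> sign x = -1.
Proof. intros H; unfold sign; destruct (Rlt_dec 0 x); [lra|]; destruct (Rlt_dec x 0); [auto|lra]. Qed.

Lemma sin_nz w : -PI < w < PI -> w <> 0 -> sin w <> 0.
Proof.
intros H1 H2. destruct (Rtotal_order w 0) as [L|[L|L]]; [|contradiction|].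
- pose proof (sin_lt_0_var w ltac:(lra) L). lra.
- pose proof (sin_gt_0 w L ltac:(lra)). lra.
Qed.

Lemma quad (a b g d : R) (Hq : admissible a b g d) :
  let e := eps a b g d in
  let u := uu a b g d in
  let x := xx a b g d in
  let y := yy a b g d in
  let z := zz a b g d in
  let s := sigm a b g d in
  cos a = e * (1 - y*z*u + x*z*u - x*y*u)
                 / (2 * sqrt (x*z*u * (1 + y) * (1 + u*y))) /\
  cos g = e * (1 + y*z*u - x*z*u - x*y*u)
                 / (2 * sqrt (y*z*u * (1 + x) * (1 + u*x))) /\
  cos d = e * (1 - y*z*u - x*z*u + x*y*u)
                 / (2 * sqrt (x*y*u * (1 + z) * (1 + u*z))) /\
  cos s = (1 - u * (x*y + x*z + y*z + 2*x*y*z))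
            / (2 * sqrt (x*y*z*u^2 * (1 + x) * (1 + y) * (1 + z))) /\
  cos b = e * (u * (1 + x) * (1 + y) * (1 + z)
                    + (1 + u*x) * (1 + u*y) * (1 + u*z)
                    - u*x*y*z * (u - 1)^2)
                 / (2 * sqrt (u * (1 + x) * (1 + y) * (1 + z)
                              * (1 + u*x) * (1 + u*y) * (1 + u*z))).
Proof.
destruct Hq as (Ha & Hb & Hg & Hd & Hk & HM).
destruct (bars_pos a b g d Ha Hb Hg Hd HM) as (pA & pB & pC & pD).
clear HM.
assert (sa: 0 < sin a) by (apply sin_gt_0; lra).
assert (sb: 0 < sin b) by (apply sin_gt_0; lra).
assert (sg: 0 < sin g) by (apply sin_gt_0; lra).
assert (sd: 0 < sin d) by (apply sin_gt_0; lra).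
assert (HS : 0 < sin (sigm a b g d) \/ sin (sigm a b g d) < 0).
{ assert (sigm a b g d <> PI).
  { intro E. apply (Hk true true true 1%Z). unfold pm. unfold sigm in E. lra. }
  destruct (Rlt_dec (sigm a b g d) PI).
  - left. apply sin_gt_0; unfold sigm in *; lra.
  - right. apply sin_lt_0; unfold sigm in *; lra. }
assert (nW1 : sin ((a+b-g-d)/2) <> 0).
{ apply sin_nz; [lra|]. intro E. apply (Hk true false false 0%Z). unfold pm. lra. }
assert (nW2 : sin ((a-b+g-d)/2) <> 0).
{ apply sin_nz; [lra|]. intro E. apply (Hk false true false 0%Z). unfold pm. lra. }
assert (nW3 : sin ((a-b-g+d)/2) <> 0).
{ apply sin_nz; [lra|]. intro E. apply (Hk false false true 0%Z). unfold pm. lra. }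
clear Hk.
pose proof (trig_h (a/2) (b/2) (g/2) (d/2)) as T. cbv zeta in T.
replace (a/2+b/2+g/2+d/2) with (sigm a b g d) in T by (unfold sigm; field).
replace (b/2+g/2+d/2-a/2) with (albar a b g d) in T by (unfold albar, sigm; field).
replace (a/2+g/2+d/2-b/2) with (bebar a b g d) in T by (unfold bebar, sigm; field).
replace (a/2+b/2+d/2-g/2) with (gabar a b g d) in T by (unfold gabar, sigm; field).
replace (a/2+b/2+g/2-d/2) with (debar a b g d) in T by (unfold debar, sigm; field).
replace (a/2+b/2-g/2-d/2) with ((a+b-g-d)/2) in T by field.
replace (a/2+g/2-b/2-d/2) with ((a-b+g-d)/2) in T by field.
replace (a/2+d/2-b/2-g/2) with ((a-b-g+d)/2) in T by field.
replace (a/2+a/2) with a in T by field.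
replace (b/2+b/2) with b in T by field.
replace (g/2+g/2) with g in T by field.
replace (d/2+d/2) with d in T by field.
cbv zeta.
unfold eps, uu, xx, yy, zz, MM, rr, ss, ff, ca, cb, cc, cd.
set (S := sin (sigm a b g d)) in *.
set (A := sin (albar a b g d)) in *.
set (B := sin (bebar a b g d)) in *.
set (C := sin (gabar a b g d)) in *.
set (D := sin (debar a b g d)) in *.
set (W1 := sin ((a+b-g-d)/2)) in *.
set (W2 := sin ((a-b+g-d)/2)) in *.
set (W3 := sin ((a-b-g+d)/2)) in *.
destruct T as (T1 & T2 & T3 & T4 & T5 & T6 & T7 & T8 & T9 & T10 & T11 & T12).
assert (nS : S <> 0) by (destruct HS; lra).
assert (nA : A <> 0) by lra. assert (nB : B <> 0) by lra.
assert (nC : C <> 0) by lra. assert (nD : D <> 0) by lra.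
assert (na : sin a <> 0) by lra. assert (nb : sin b <> 0) by lra.
assert (ng : sin g <> 0) by lra. assert (nd : sin d <> 0) by lra.
remember (1 / (sin a / A * (sin d / D) - 1)) as x eqn:Ex.
remember (1 / (sin g / C * (sin d / D) - 1)) as y eqn:Ey.
remember (1 / (sin a / A * (sin g / C) - 1)) as z eqn:Ez.
remember (1 - sin a / A * (sin b / B) * (sin g / C) * (sin d / D)) as u eqn:Eu.
assert (hx : x = A*D/(S*W3)).
{ rewrite Ex. replace (sin a / A * (sin d / D) - 1) with ((sin a * sin d - A*D)/(A*D)) by (field; nzt).
  replace (sin a * sin d - A*D) with (S*W3) by lra. field. nzt. }
assert (hy : y = -(C*D)/(S*W1)).
{ rewrite Ey. replace (sin g / C * (sin d / D) - 1) with ((sin g * sin d - C*D)/(C*D)) by (field; nzt).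
  replace (sin g * sin d - C*D) with (-(S*W1)) by lra. field. nzt. }
assert (hz : z = A*C/(S*W2)).
{ rewrite Ez. replace (sin a / A * (sin g / C) - 1) with ((sin a * sin g - A*C)/(A*C)) by (field; nzt).
  replace (sin a * sin g - A*C) with (S*W2) by lra. field. nzt. }
assert (hu : u = -(W1*W2*W3*S)/(A*B*C*D)).
{ rewrite Eu. replace (sin a / A * (sin b / B) * (sin g / C) * (sin d / D))
    with ((sin a * sin b * sin g * sin d)/(A*B*C*D)) by (field; nzt).
  rewrite T4. field. nzt. }
assert (hu1 : u - 1 = -(sin a * sin b * sin g * sin d)/(A*B*C*D)).
{ rewrite Eu. field. nzt. }
assert (h1x : 1 + x = sin a * sin d/(S*W3)).
{ rewrite hx, T1. field. nzt. }
assert (h1y : 1 + y = -(sin g * sin d)/(S*W1)).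
{ rewrite hy, T2. field. nzt. }
assert (h1z : 1 + z = sin a * sin g/(S*W2)).
{ rewrite hz, T3. field. nzt. }
assert (h1ux : 1 + u*x = sin a * sin d/(B*C)).
{ rewrite hu, hx, T6. field. nzt. }
assert (h1uy : 1 + u*y = sin g * sin d/(A*B)).
{ rewrite hu, hy, T5. field. nzt. }
assert (h1uz : 1 + u*z = sin a * sin g/(B*D)).
{ rewrite hu, hz, T7. field. nzt. }
rewrite h1ux, h1uy, h1uz, h1x, h1y, h1z, hu1, hx, hy, hz, hu.
clear h1ux h1uy h1uz h1x h1y h1z hu1 hx hy hz hu Ex Ey Ez Eu.
pose proof (solve2 _ (sin g * sin d) _ ltac:(nzt) T8) as C8.
pose proof (solve2 _ (sin a * sin d) _ ltac:(nzt) T9) as C9.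
pose proof (solve2 _ (sin a * sin g) _ ltac:(nzt) T10) as C10.
pose proof (solve2 _ (sin a * sin g * sin d) _ ltac:(nzt) T11) as C11.
pose proof (solve2 _ (S * B) _ ltac:(nzt) T12) as C12.
clear T1 T2 T3 T4 T5 T6 T7 T8 T9 T10 T11 T12.
assert (sS2 : 0 < S*S) by (clear - HS; destruct HS; nra).
destruct HS as [HS|HS].
- rewrite (sign_pos S HS). assert (hES : 0 < 1*S) by lra. 
  split; [| split; [| split; [| split]]];
  [ rewrite (sqrt_K _ (sin g * sin d / (1*S*B))); [rewrite C8; field; nzt | kpos | field; nzt]
  | rewrite (sqrt_K _ (sin a * sin d / (1*S*B))); [rewrite C9; field; nzt | kpos | field; nzt]
  | rewrite (sqrt_K _ (sin a * sin g / (1*S*B))); [rewrite C10; field; nzt | kpos | field; nzt]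
  | rewrite (sqrt_K _ (sin a * sin g * sin d / (S*S*B))); [rewrite C11; field; nzt | kpos | field; nzt]
  | rewrite (sqrt_K _ (sin a * sin a * sin g * sin g * sin d * sin d / (1*S*A*B*B*C*D)));
      [rewrite C12; field; nzt | kpos | field; nzt] ].
- rewrite (sign_neg S HS). assert (hES : 0 < -1*S) by lra. 
  split; [| split; [| split; [| split]]];
  [ rewrite (sqrt_K _ (sin g * sin d / (-1*S*B))); [rewrite C8; field; nzt | kpos | field; nzt]
  | rewrite (sqrt_K _ (sin a * sin d / (-1*S*B))); [rewrite C9; field; nzt | kpos | field; nzt]
  | rewrite (sqrt_K _ (sin a * sin g / (-1*S*B))); [rewrite C10; field; nzt | kpos | field; nzt]
  | rewrite (sqrt_K _ (sin a * sin g * sin d / (S*S*B))); [rewrite C11; field; nzt | kpos | field; nzt]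
  | rewrite (sqrt_K _ (sin a * sin a * sin g * sin g * sin d * sin d / (-1*S*A*B*B*C*D)));
      [rewrite C12; field; nzt | kpos | field; nzt] ].
Qed.

Theorem lemma6 (al be ga de : nat -> R)
  (H : forall i : nat, (1 <= i <= 4)%nat -> admissible (al i) (be i) (ga i) (de i)) :
  forall i : nat, (1 <= i <= 4)%nat ->
  let e := eps (al i) (be i) (ga i) (de i) in
  let u := uu (al i) (be i) (ga i) (de i) in
  let x := xx (al i) (be i) (ga i) (de i) in
  let y := yy (al i) (be i) (ga i) (de i) in
  let z := zz (al i) (be i) (ga i) (de i) in
  let s := sigm (al i) (be i) (ga i) (de i) in
  cos (al i) = e * (1 - y*z*u + x*z*u - x*y*u)
                 / (2 * sqrt (x*z*u * (1 + y) * (1 + u*y))) /\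
  cos (ga i) = e * (1 + y*z*u - x*z*u - x*y*u)
                 / (2 * sqrt (y*z*u * (1 + x) * (1 + u*x))) /\
  cos (de i) = e * (1 - y*z*u - x*z*u + x*y*u)
                 / (2 * sqrt (x*y*u * (1 + z) * (1 + u*z))) /\
  cos s = (1 - u * (x*y + x*z + y*z + 2*x*y*z))
            / (2 * sqrt (x*y*z*u^2 * (1 + x) * (1 + y) * (1 + z))) /\
  cos (be i) = e * (u * (1 + x) * (1 + y) * (1 + z)
                    + (1 + u*x) * (1 + u*y) * (1 + u*z)
                    - u*x*y*z * (u - 1)^2)
                 / (2 * sqrt (u * (1 + x) * (1 + y) * (1 + z)
                              * (1 + u*x) * (1 + u*y) * (1 + u*z))).
Proof.
intros i Hi. apply quad. apply H. exact Hi.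
Qed.
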